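(* Let $(\lambda_m)_{m\in\mathbb{N}_0}$ be real numbers, $\gamma>0$, $f\in C^\infty[x_0,x_0+\gamma]$ complex-valued, and $0<2\delta<\gamma$. Then for every $m\in\mathbb{N}_0$ and all $x\in[x_0,x_0+\delta]$, $$|D^{(2m+1)}f(x)|\le 2\max\left\{\tfrac2\delta,\delta\right\}e^{(|\lambda_{2m}|+|\lambda_{2m+1}|)\delta}\left(\max_{t\in[x_0,x_0+2\delta]}|D^{(2m)}f(t)|+\max_{t\in[x_0,x_0+2\delta]}|D^{(2m+2)}f(t)|\right).$$
   Context: $D^{(n)}f=(\frac{d}{dt}-\lambda_0)\cdots(\frac{d}{dt}-\lambda_{n-1})f$ with $D^{(0)}f=f$ (one-sided derivatives at endpoints). *)

(* Defs.v *)
From Stdlib Require Import Reals.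
Open Scope R_scope.

(* A complex-valued function is represented by its real and imaginary parts
   fr, fi : R -> R; the modulus of (u + i v) is sqrt(u^2 + v^2). *)
Definition cmod (u v : R) : R := sqrt (u ^ 2 + v ^ 2).

(* Derivative of g at x (a <= x <= b) relative to the interval [a,b]:
   one-sided at the endpoints, two-sided in the interior. *)
Definition deriv_in (a b : R) (g : R -> R) (x l : R) : Prop :=
  forall eps : R, 0 < eps -> exists del : R, 0 < del /\
    forall y : R, a <= y <= b -> y <> x -> Rabs (y - x) < del ->
      Rabs ((g y - g x) / (y - x) - l) < eps.

Definition smooth_on (a b : R) (g : R -> R) : Prop :=
  exists F : nat -> R -> R,
    (forall x, a <= x <= b -> F 0%nat x = g x) /\
    (forall (k : nat) (x : R), a <= x <= b -> deriv_in a b (F k) x (F (S k) x)).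

(* Dop a b lam n g h  :<->  h = D^{(n)} g on [a,b], where
   D^{(n)} = (d/dt - lam 0) ... (d/dt - lam (n-1)), D^{(0)} = id, i.e.
   D^{(n+1)}_lam g = (d/dt - lam 0) (D^{(n)}_{lam(.+1)} g).
   Since the lam are real, for complex g = gr + i gi one has
   D^{(n)} g = D^{(n)} gr + i D^{(n)} gi. *)
Inductive Dop (a b : R) : (nat -> R) -> nat -> (R -> R) -> (R -> R) -> Prop :=
| Dop_0 : forall (lam : nat -> R) (g h : R -> R),
    (forall x, a <= x <= b -> h x = g x) -> Dop a b lam 0%nat g h
| Dop_S : forall (lam : nat -> R) (n : nat) (g h k : R -> R),
    Dop a b (fun j => lam (S j)) n g h ->
    (forall x, a <= x <= b -> deriv_in a b h x (k x + lam 0%nat * h x)) ->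
    Dop a b lam (S n) g k.

Definition cmod_image (c d : R) (hr hi : R -> R) : R -> Prop :=
  fun y => exists t, c <= t <= d /\ y = cmod (hr t) (hi t).

(* Main.v *)
Require Import Defs.
From Stdlib Require Import Reals Lra Lia.
From Coquelicot Require Coquelicot.
Open Scope R_scope.

Module Aux.
Import Coquelicot.Coquelicot.

Definition clamp (A B t : R) : R := Rmax A (Rmin B t).

Lemma clamp_id A B t : A <= t <= B -> clamp A B t = t.
Proof. intros H; unfold clamp, Rmax, Rmin; repeat destruct Rle_dec; lra. Qed.

Lemma clamp_in A B t : A <= B -> A <= clamp A B t <= B.
Proof. intros H; unfold clamp, Rmax, Rmin; repeat destruct Rle_dec; lra. Qed.

Lemma clamp_lip A B y z : A <= B -> Rabs (clamp A B y - clamp A B z) <= Rabs (y - z).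
Proof.
  intros H; unfold clamp, Rmax, Rmin; repeat destruct Rle_dec;
  unfold Rabs; repeat destruct Rcase_abs; lra.
Qed.

Lemma deriv_in_cont A B g c l : deriv_in A B g c l -> forall eps, 0 < eps ->
  exists alp, 0 < alp /\ forall y, A <= y <= B -> Rabs (y - c) < alp -> Rabs (g y - g c) < eps.
Proof.
  intros H eps Heps.
  destruct (H 1 ltac:(lra)) as [del [Hdel Hd]].
  set (L := Rabs l + 1).
  assert (HL : 0 < L) by (unfold L; pose proof (Rabs_pos l); lra).
  exists (Rmin del (eps / L)); split.
  { apply Rmin_pos; [lra| apply Rdiv_lt_0_compat; lra]. }
  intros y Hy Hyc.
  destruct (Req_dec y c) as [E|E].
  { subst; replace (g c - g c) with 0 by ring; rewrite Rabs_R0; lra. }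
  assert (Hq := Hd y Hy E (Rlt_le_trans _ _ _ Hyc (Rmin_l _ _))).
  set (q := (g y - g c) / (y - c)) in *.
  assert (Eq : g y - g c = q * (y - c)) by (unfold q; field; lra).
  rewrite Eq, Rabs_mult.
  assert (Hqq : Rabs q <= L).
  { unfold L. replace q with ((q - l) + l) by ring.
    pose proof (Rabs_triang (q - l) l); lra. }
  assert (Hyc2 : Rabs (y - c) < eps / L) by (eapply Rlt_le_trans; [exact Hyc| apply Rmin_r]).
  assert (Habs : 0 < Rabs (y - c)) by (apply Rabs_pos_lt; lra).
  apply Rle_lt_trans with (L * Rabs (y - c)).
  { apply Rmult_le_compat_r; [lra | exact Hqq]. }
  apply Rlt_le_trans with (L * (eps / L)).
  { apply Rmult_lt_compat_l; lra. }
  right; field; lra.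
Qed.

Lemma clamp_continuity A B g g' : A <= B ->
  (forall t, A <= t <= B -> deriv_in A B g t (g' t)) ->
  forall c, continuity_pt (fun t => g (clamp A B t)) c.
Proof.
  intros HAB Hd c.
  unfold continuity_pt, continue_in, limit1_in, limit_in; simpl; unfold R_dist.
  intros eps Heps.
  set (c' := clamp A B c).
  assert (Hc' : A <= c' <= B) by (apply clamp_in; lra).
  destruct (deriv_in_cont _ _ _ _ _ (Hd c' Hc') eps Heps) as [alp [Ha Hal]].
  exists alp; split; [lra|].
  intros x [_ Hx].
  apply Hal. apply clamp_in; lra.
  eapply Rle_lt_trans; [apply clamp_lip; lra | exact Hx].
Qed.

Lemma clamp_deriv A B g c l : A < c < B -> deriv_in A B g c l ->
  derivable_pt_lim (fun t => g (clamp A B t)) c l.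
Proof.
  intros Hc H eps Heps.
  destruct (H eps Heps) as [del [Hdel Hd]].
  assert (Hp : 0 < Rmin del (Rmin (c - A) (B - c))).
  { repeat apply Rmin_pos; lra. }
  exists (mkposreal _ Hp). simpl. intros h Hh0 Hh.
  assert (H1 := Rmin_l del (Rmin (c - A) (B - c))).
  assert (H2 := Rmin_r del (Rmin (c - A) (B - c))).
  assert (H3 := Rmin_l (c - A) (B - c)).
  assert (H4 := Rmin_r (c - A) (B - c)).
  assert (Hh' : - Rmin del (Rmin (c - A) (B - c)) < h < Rmin del (Rmin (c - A) (B - c))).
  { revert Hh; unfold Rabs; destruct Rcase_abs; lra. }
  rewrite (clamp_id A B (c + h)) by lra.
  rewrite (clamp_id A B c) by lra.
  replace h with ((c + h) - c) at 2 by ring.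
  apply Hd; [lra | lra |].
  replace (c + h - c) with h by ring. lra.
Qed.

Lemma deriv_in_unique A B g x l1 l2 : A < B -> A <= x <= B ->
  deriv_in A B g x l1 -> deriv_in A B g x l2 -> l1 = l2.
Proof.
  intros HAB Hx H1 H2.
  destruct (Req_dec l1 l2) as [E|E]; [exact E|]. exfalso.
  set (eps := Rabs (l1 - l2) / 2).
  assert (Heps : 0 < eps) by (unfold eps; assert (0 < Rabs (l1 - l2)) by (apply Rabs_pos_lt; lra); lra).
  destruct (H1 eps Heps) as [d1 [Hd1 K1]].
  destruct (H2 eps Heps) as [d2 [Hd2 K2]].
  set (h := Rmin (Rmin d1 d2) (B - A) / 2).
  assert (0 < Rmin (Rmin d1 d2) (B - A)) by (repeat apply Rmin_pos; lra). assert (Hh : 0 < h) by (unfold h; lra).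
  assert (Hm1 := Rmin_l (Rmin d1 d2) (B - A)).
  assert (Hm2 := Rmin_r (Rmin d1 d2) (B - A)).
  assert (Hm3 := Rmin_l d1 d2). assert (Hm4 := Rmin_r d1 d2).
  assert (exists y, A <= y <= B /\ y <> x /\ Rabs (y - x) = h) as [y [Hy [Hyx Hyh]]].
  { destruct (Rle_dec (x + h) B).
    - exists (x + h); split; [lra|split; [lra|]].
      replace (x + h - x) with h by ring; apply Rabs_right; lra.
    - exists (x - h); split; [unfold h in *; lra|split; [lra|]].
      replace (x - h - x) with (- h) by ring; rewrite Rabs_Ropp; apply Rabs_right; lra. }
  assert (A1 := K1 y Hy Hyx ltac:(unfold h in *; lra)).
  assert (A2 := K2 y Hy Hyx ltac:(unfold h in *; lra)).
  set (q := (g y - g x) / (y - x)) in *.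
  assert (T := Rabs_triang (q - l2) (l1 - q)).
  replace (q - l2 + (l1 - q)) with (l1 - l2) in T by ring.
  rewrite Rabs_minus_sym in A1 at 1.
  unfold eps in *; lra.
Qed.

Lemma deriv_in_ext A B g h x l : A <= x <= B -> (forall t, A <= t <= B -> g t = h t) ->
  deriv_in A B g x l -> deriv_in A B h x l.
Proof.
  intros Hx E H eps Heps. destruct (H eps Heps) as [d [Hd K]].
  exists d; split; [lra|]. intros y Hy Hyx Hyd.
  rewrite <- (E y Hy), <- (E x Hx). apply K; assumption.
Qed.

Lemma deriv_in_lin A B g h x l1 l2 a b :
  deriv_in A B g x l1 -> deriv_in A B h x l2 ->
  deriv_in A B (fun t => a * g t + b * h t) x (a * l1 + b * l2).
Proof.
  intros H1 H2 eps Heps.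
  set (e := eps / (2 * (Rabs a + Rabs b + 1))).
  assert (Hpa := Rabs_pos a). assert (Hpb := Rabs_pos b).
  assert (He : 0 < e) by (unfold e; apply Rdiv_lt_0_compat; lra).
  destruct (H1 e He) as [d1 [Hd1 K1]].
  destruct (H2 e He) as [d2 [Hd2 K2]].
  exists (Rmin d1 d2); split; [apply Rmin_pos; lra|].
  intros y Hy Hyx Hyd.
  assert (A1 := K1 y Hy Hyx (Rlt_le_trans _ _ _ Hyd (Rmin_l _ _))).
  assert (A2 := K2 y Hy Hyx (Rlt_le_trans _ _ _ Hyd (Rmin_r _ _))).
  replace ((a * g y + b * h y - (a * g x + b * h x)) / (y - x) - (a * l1 + b * l2))
    with (a * ((g y - g x) / (y - x) - l1) + b * ((h y - h x) / (y - x) - l2))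
    by (field; lra).
  eapply Rle_lt_trans; [apply Rabs_triang|].
  rewrite !Rabs_mult.
  assert (Q1 : Rabs a * Rabs ((g y - g x) / (y - x) - l1) <= Rabs a * e)
    by (apply Rmult_le_compat_l; lra).
  assert (Q2 : Rabs b * Rabs ((h y - h x) / (y - x) - l2) <= Rabs b * e)
    by (apply Rmult_le_compat_l; lra).
  assert (Q3 : (Rabs a + Rabs b + 1) * e = eps / 2) by (unfold e; field; lra).
  assert (Q4 : (Rabs a + Rabs b) * e <= (Rabs a + Rabs b + 1) * e) by nra.
  lra.
Qed.

Lemma Dop_step A B : A < B -> forall n lam g h k,
  Dop A B lam n g h -> Dop A B lam (S n) g k ->
  forall x, A <= x <= B -> deriv_in A B h x (k x + lam n * h x).
Proof.
  intros HAB n; induction n as [|n IH]; intros lam g h k Hh Hk x Hx.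
  - inversion Hh as [lam1 g1 h1 E1| ]; subst.
    inversion Hk as [| lam2 n2 g2 h2 k2 Hd2 Hder2]; subst.
    inversion Hd2 as [lam3 g3 h3 E3|]; subst.
    assert (E : forall t, A <= t <= B -> h2 t = h t) by (intros t Ht; rewrite E1, E3; auto).
    rewrite <- (E x Hx).
    apply (deriv_in_ext A B h2 h); auto.
  - inversion Hh as [| lam1 n1 g1 h1 k1 Hd1 Hder1]; subst.
    inversion Hk as [| lam2 n2 g2 h2 k2 Hd2 Hder2]; subst.
    assert (HI := IH _ _ _ _ Hd1 Hd2).
    assert (Eq : forall t, A <= t <= B ->
      h t = 1 * h2 t + (lam (S n) - lam 0%nat) * h1 t).
    { intros t Ht.
      assert (U := deriv_in_unique A B h1 t _ _ HAB Ht (Hder1 t Ht) (HI t Ht)).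
      simpl in U. lra. }
    assert (D := deriv_in_lin A B h2 h1 x _ _ 1 (lam (S n) - lam 0%nat) (Hder2 x Hx) (Hder1 x Hx)).
    assert (D' := deriv_in_ext A B _ h x _ Hx (fun t Ht => eq_sym (Eq t Ht)) D).
    replace (k x + lam (S n) * h x) with
      (1 * (k x + lam 0%nat * h2 x) + (lam (S n) - lam 0%nat) * (h x + lam 0%nat * h1 x)).
    + exact D'.
    + rewrite (Eq x Hx). ring.
Qed.

Lemma exp_prod_deriv A B q q' mu t : A < t < B -> deriv_in A B q t (q' + mu * q t) ->
  is_derive (fun s => exp (-mu*s) * q (clamp A B s)) t (exp (-mu*t) * q').
Proof.
  intros Ht Hq.
  assert (H : is_derive (fun s => q (clamp A B s)) t (q' + mu * q t)).
  { apply is_derive_Reals. apply clamp_deriv; auto. }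
  assert (He: is_derive (fun s => exp (-mu*s)) t (-mu*exp(-mu*t))).
  { auto_derive; [trivial| ring]. }
  generalize (is_derive_mult _ _ _ _ _ He H (fun a b => Rmult_comm a b)). intros HH.
  replace (exp (- mu * t) * q') with (-mu*exp(-mu*t) * q (clamp A B t) + exp (-mu*t) * (q' + mu * q t)).
  - exact HH.
  - rewrite clamp_id by lra. ring.
Qed.

Lemma exp_inv u : exp u * exp (- u) = 1.
Proof. rewrite <- exp_plus. replace (u + - u) with 0 by ring. apply exp_0. Qed.

Lemma mvt_step A B q q' mu a b : A < B -> A <= a <= b -> b <= B ->
  (forall t, A <= t <= B -> deriv_in A B q t (q' t + mu * q t)) ->
  exists c, a <= c <= b /\
    q' c * (b - a) = exp (mu * (c - b)) * q b - exp (mu * (c - a)) * q a /\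
    q a = exp (mu * (a - b)) * q b - exp (mu * (a - c)) * q' c * (b - a).
Proof.
  intros HAB Ha Hb Hd.
  destruct (MVT_gen (fun s => exp (-mu*s) * q (clamp A B s)) a b (fun s => exp (-mu*s) * q' s))
    as [c [Hc R]].
  - rewrite Rmin_left, Rmax_right by lra. intros t Ht.
    apply exp_prod_deriv; [lra| apply Hd; lra].
  - rewrite Rmin_left, Rmax_right by lra. intros t Ht.
    apply (continuity_pt_mult (fun s => exp (-mu*s)) (fun s => q (clamp A B s))).
    + apply derivable_continuous_pt. exists (-mu*exp(-mu*t)).
      apply is_derive_Reals. auto_derive; [trivial| ring].
    + apply (clamp_continuity A B q (fun t => q' t + mu * q t)); [lra| exact Hd].
  - rewrite Rmin_left, Rmax_right in Hc by lra.
    cbv beta in R. rewrite !clamp_id in R by lra.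
    exists c; split; [exact Hc|split].
    + assert (E1 : exp (mu * (c - b)) = exp (mu * c) * exp (- mu * b))
        by (rewrite <- exp_plus; f_equal; ring).
      assert (E2 : exp (mu * (c - a)) = exp (mu * c) * exp (- mu * a))
        by (rewrite <- exp_plus; f_equal; ring).
      rewrite E1, E2.
      transitivity (exp (mu * c) * (exp (- mu * b) * q b - exp (- mu * a) * q a)); [|ring].
      rewrite R. replace (- mu * c) with (- (mu * c)) by ring.
      transitivity ((exp (mu * c) * exp (- (mu * c))) * q' c * (b - a)); [rewrite exp_inv; ring| ring].
    + assert (R' : exp (- mu * b) * q b - exp (- mu * c) * q' c * (b - a) = exp (- mu * a) * q a)
        by lra.
      assert (E1 : exp (mu * (a - b)) = exp (mu * a) * exp (- mu * b))
        by (rewrite <- exp_plus; f_equal; ring).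
      assert (E2 : exp (mu * (a - c)) = exp (mu * a) * exp (- mu * c))
        by (rewrite <- exp_plus; f_equal; ring).
      rewrite E1, E2.
      transitivity (exp (mu * a) * (exp (- mu * b) * q b - exp (- mu * c) * q' c * (b - a))); [|ring].
      rewrite R'. replace (- mu * a) with (- (mu * a)) by ring.
      transitivity ((exp (mu * a) * exp (- (mu * a))) * q a); [rewrite exp_inv; ring| ring].
Qed.

Lemma lin_le mu y d : Rabs y <= d -> mu * y <= Rabs mu * d.
Proof.
  intros H. apply Rle_trans with (Rabs (mu*y)); [apply Rle_abs|].
  rewrite Rabs_mult. apply Rmult_le_compat_l; [apply Rabs_pos|exact H].
Qed.

Lemma exp_le_mono u v : u <= v -> exp u <= exp v.
Proof.
  intros H; destruct (Rle_lt_or_eq_dec _ _ H) as [H'|H'].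
  - left; apply exp_increasing; exact H'.
  - subst; right; reflexivity.
Qed.

Lemma abs_bd u v d : u <= v <= u + d -> Rabs (v - u) <= d /\ Rabs (u - v) <= d.
Proof. intros H; split; unfold Rabs; destruct Rcase_abs; lra. Qed.

Lemma exp_ge0 u : 0 <= exp u.
Proof. left; apply exp_pos. Qed.

Lemma real_core A B x d mu nu M0 M2 (q0 q1 q2 : R -> R) :
  A < B -> A <= x -> x + d <= B -> 0 < d ->
  (forall t, A <= t <= B -> deriv_in A B q0 t (q1 t + mu * q0 t)) ->
  (forall t, A <= t <= B -> deriv_in A B q1 t (q2 t + nu * q1 t)) ->
  (forall t, x <= t <= x + d -> Rabs (q0 t) <= M0) ->
  (forall t, x <= t <= x + d -> Rabs (q2 t) <= M2) ->
  Rabs (q1 x) <= exp ((Rabs mu + Rabs nu) * d) * (2 * M0 / d + d * M2).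
Proof.
  intros HAB Hx Hxd Hd D0 D1 B0 B2.
  destruct (mvt_step A B q0 q1 mu x (x + d)) as [xi [Hxi [E1 _]]]; try lra; auto.
  set (Em := exp (Rabs mu * d)). set (En := exp (Rabs nu * d)).
  assert (HEm : 1 <= Em) by (unfold Em; rewrite <- exp_0; apply exp_le_mono;
    apply Rmult_le_pos; [apply Rabs_pos| lra]).
  assert (HEn : 0 < En) by apply exp_pos.
  assert (M0p : 0 <= M0) by (apply Rle_trans with (Rabs (q0 x)); [apply Rabs_pos| apply B0; lra]).
  assert (M2p : 0 <= M2) by (apply Rle_trans with (Rabs (q2 x)); [apply Rabs_pos| apply B2; lra]).
  assert (Bd1 : Rabs (q1 xi) * d <= 2 * Em * M0).
  { replace (x + d - x) with d in E1 by ring.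
    rewrite <- (Rabs_right d) by lra. rewrite <- Rabs_mult, E1.
    unfold Rminus at 1. eapply Rle_trans; [apply Rabs_triang|].
    rewrite Rabs_Ropp, !Rabs_mult.
    rewrite (Rabs_right (exp (mu * (xi - (x + d))))) by (apply Rle_ge, exp_ge0).
    rewrite (Rabs_right (exp (mu * (xi - x)))) by (apply Rle_ge, exp_ge0).
    assert (F1 : exp (mu * (xi - (x + d))) <= Em).
    { apply exp_le_mono, lin_le. destruct (abs_bd xi (x + d) d); [lra|].
      rewrite Rabs_minus_sym; lra. }
    assert (F2 : exp (mu * (xi - x)) <= Em).
    { apply exp_le_mono, lin_le. destruct (abs_bd x xi d); [lra|]. lra. }
    assert (G1 : exp (mu * (xi - (x + d))) * Rabs (q0 (x + d)) <= Em * M0).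
    { apply Rmult_le_compat; [apply exp_ge0| apply Rabs_pos| exact F1| apply B0; lra]. }
    assert (G2 : exp (mu * (xi - x)) * Rabs (q0 x) <= Em * M0).
    { apply Rmult_le_compat; [apply exp_ge0| apply Rabs_pos| exact F2| apply B0; lra]. }
    lra. }
  assert (Bd1' : Rabs (q1 xi) <= 2 * Em * M0 / d).
  { apply Rmult_le_reg_r with d; [lra|].
    replace (2 * Em * M0 / d * d) with (2 * Em * M0) by (field; lra). exact Bd1. }
  destruct (mvt_step A B q1 q2 nu x xi) as [tau [Htau [_ E2]]]; try lra; auto.
  assert (Bd2 : Rabs (q1 x) <= En * Rabs (q1 xi) + En * M2 * d).
  { rewrite E2. unfold Rminus at 1. eapply Rle_trans; [apply Rabs_triang|].
    rewrite Rabs_Ropp, !Rabs_mult.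
    rewrite (Rabs_right (exp (nu * (x - xi)))) by (apply Rle_ge, exp_ge0).
    rewrite (Rabs_right (exp (nu * (x - tau)))) by (apply Rle_ge, exp_ge0).
    assert (F1 : exp (nu * (x - xi)) <= En).
    { apply exp_le_mono, lin_le. destruct (abs_bd x xi d); lra. }
    assert (F2 : exp (nu * (x - tau)) <= En).
    { apply exp_le_mono, lin_le. destruct (abs_bd x tau d); lra. }
    assert (F3 : Rabs (xi - x) <= d) by (destruct (abs_bd x xi d); lra).
    apply Rplus_le_compat.
    - apply Rmult_le_compat_r; [apply Rabs_pos| exact F1].
    - apply Rmult_le_compat; [apply Rmult_le_pos; [apply exp_ge0|apply Rabs_pos] | apply Rabs_pos | | exact F3].
      apply Rmult_le_compat; [apply exp_ge0| apply Rabs_pos| exact F2| apply B2; lra]. }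
  replace (exp ((Rabs mu + Rabs nu) * d) * (2 * M0 / d + d * M2))
    with (En * (2 * Em * M0 / d) + Em * (En * M2 * d)).
  2:{ rewrite Rmult_plus_distr_r, exp_plus. fold Em En. field. lra. }
  eapply Rle_trans; [exact Bd2|].
  apply Rplus_le_compat.
  - apply Rmult_le_compat_l; lra.
  - assert (0 <= En * M2 * d) by (apply Rmult_le_pos; [apply Rmult_le_pos|]; lra).
    rewrite <- (Rmult_1_l (En * M2 * d)) at 1.
    apply Rmult_le_compat_r; lra.
Qed.
End Aux.
Import Aux.

Lemma cs_ineq a b u v : Rabs (a * u + b * v) <= cmod a b * cmod u v.
Proof.
  unfold cmod. rewrite <- sqrt_mult_alt by (simpl; nra).
  rewrite <- sqrt_Rsqr_abs. apply sqrt_le_1_alt. unfold Rsqr; simpl.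
  assert (0 <= (a * v - b * u) * (a * v - b * u)) by apply Rle_0_sqr.
  assert (E : (a * (a * 1) + b * (b * 1)) * (u * (u * 1) + v * (v * 1)) - (a * u + b * v) * (a * u + b * v) = (a * v - b * u) * (a * v - b * u)) by ring.
  lra.
Qed.

Lemma cmod_sq a b : cmod a b * cmod a b = a * a + b * b.
Proof. unfold cmod. rewrite sqrt_sqrt by (simpl; nra). simpl; ring. Qed.

Lemma cmod_ge0 a b : 0 <= cmod a b.
Proof. apply sqrt_pos. Qed.

Lemma deriv_in_val A B g x l1 l2 : l1 = l2 -> deriv_in A B g x l1 -> deriv_in A B g x l2.
Proof. intros ->; auto. Qed.

Theorem mainTheorem20 (lam : nat -> R) (gamma delta x0 : R) (fr fi : R -> R) :
  0 < gamma ->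
  smooth_on x0 (x0 + gamma) fr -> smooth_on x0 (x0 + gamma) fi ->
  0 < 2 * delta -> 2 * delta < gamma ->
  forall (m : nat) (D0r D0i D1r D1i D2r D2i : R -> R) (M0 M2 : R),
    Dop x0 (x0 + gamma) lam (2 * m) fr D0r ->
    Dop x0 (x0 + gamma) lam (2 * m) fi D0i ->
    Dop x0 (x0 + gamma) lam (2 * m + 1) fr D1r ->
    Dop x0 (x0 + gamma) lam (2 * m + 1) fi D1i ->
    Dop x0 (x0 + gamma) lam (2 * m + 2) fr D2r ->
    Dop x0 (x0 + gamma) lam (2 * m + 2) fi D2i ->
    is_lub (cmod_image x0 (x0 + 2 * delta) D0r D0i) M0 ->
    is_lub (cmod_image x0 (x0 + 2 * delta) D2r D2i) M2 ->
    forall x : R, x0 <= x <= x0 + delta ->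
      cmod (D1r x) (D1i x) <=
        2 * Rmax (2 / delta) delta
          * exp ((Rabs (lam (2 * m)%nat) + Rabs (lam (2 * m + 1)%nat)) * delta)
          * (M0 + M2).
Proof.
  intros Hg _ _ Hd Hdg m D0r D0i D1r D1i D2r D2i M0 M2 H0r H0i H1r H1i H2r H2i L0 L2 x Hx.
  assert (HAB : x0 < x0 + gamma) by lra.
  assert (H1r' : Dop x0 (x0 + gamma) lam (S (2 * m)) fr D1r) by (replace (S (2 * m)) with (2 * m + 1)%nat by lia; exact H1r).
  assert (H1i' : Dop x0 (x0 + gamma) lam (S (2 * m)) fi D1i) by (replace (S (2 * m)) with (2 * m + 1)%nat by lia; exact H1i).
  assert (H2r' : Dop x0 (x0 + gamma) lam (S (2 * m + 1)) fr D2r) by (replace (S (2 * m + 1)) with (2 * m + 2)%nat by lia; exact H2r).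
  assert (H2i' : Dop x0 (x0 + gamma) lam (S (2 * m + 1)) fi D2i) by (replace (S (2 * m + 1)) with (2 * m + 2)%nat by lia; exact H2i).
  assert (d0r := Dop_step _ _ HAB _ _ _ _ _ H0r H1r').
  assert (d0i := Dop_step _ _ HAB _ _ _ _ _ H0i H1i').
  assert (d1r := Dop_step _ _ HAB _ _ _ _ _ H1r H2r').
  assert (d1i := Dop_step _ _ HAB _ _ _ _ _ H1i H2i').
  set (mu := lam (2 * m)%nat) in *. set (nu := lam (2 * m + 1)%nat) in *.
  set (a := D1r x). set (b := D1i x). set (r := cmod a b).
  set (q0 := fun t => a * D0r t + b * D0i t).
  set (q1 := fun t => a * D1r t + b * D1i t).
  set (q2 := fun t => a * D2r t + b * D2i t).
  assert (M0p' : 0 <= cmod (D0r x0) (D0i x0)) by apply cmod_ge0.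
  assert (M0pp : 0 <= M0) by (apply Rle_trans with (cmod (D0r x0) (D0i x0)); [exact M0p'| apply (proj1 L0); exists x0; split; [lra|reflexivity]]).
  assert (M2pp : 0 <= M2) by (apply Rle_trans with (cmod (D2r x0) (D2i x0)); [apply cmod_ge0| apply (proj1 L2); exists x0; split; [lra|reflexivity]]).
  assert (hr : 0 <= r) by apply cmod_ge0.
  assert (Hcore : Rabs (q1 x) <= exp ((Rabs mu + Rabs nu) * delta) * (2 * (r * M0) / delta + delta * (r * M2))).
  { apply (real_core x0 (x0 + gamma) x delta mu nu (r * M0) (r * M2) q0 q1 q2); try lra.
    - intros t Ht. apply deriv_in_val with (a * (D1r t + mu * D0r t) + b * (D1i t + mu * D0i t)).
      + unfold q0, q1; ring.
      + apply deriv_in_lin; auto.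
    - intros t Ht. apply deriv_in_val with (a * (D2r t + nu * D1r t) + b * (D2i t + nu * D1i t)).
      + unfold q1, q2; ring.
      + apply deriv_in_lin; auto.
    - intros t Ht. unfold q0. eapply Rle_trans; [apply cs_ineq|].
      apply Rmult_le_compat_l; [exact hr|]. apply (proj1 L0). exists t; split; [lra| reflexivity].
    - intros t Ht. unfold q2. eapply Rle_trans; [apply cs_ineq|].
      apply Rmult_le_compat_l; [exact hr|]. apply (proj1 L2). exists t; split; [lra| reflexivity]. }
  assert (Eq1 : q1 x = r * r) by (unfold q1, r; rewrite cmod_sq; reflexivity).
  rewrite Eq1, Rabs_right in Hcore by (apply Rle_ge, Rmult_le_pos; lra).
  set (E := exp ((Rabs mu + Rabs nu) * delta)) in *.
  assert (HE : 0 < E) by apply exp_pos.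
  set (K := Rmax (2 / delta) delta).
  assert (K1 : 2 / delta <= K) by apply Rmax_l.
  assert (K2 : delta <= K) by apply Rmax_r.
  assert (Bnd : E * (2 * M0 / delta + delta * M2) <= 2 * K * E * (M0 + M2)).
  { assert (2 * M0 / delta = (2 / delta) * M0) by (field; lra).
    assert ((2 / delta) * M0 <= K * M0) by (apply Rmult_le_compat_r; lra).
    assert (delta * M2 <= K * M2) by (apply Rmult_le_compat_r; lra).
    assert (0 <= K * (M0 + M2)) by (apply Rmult_le_pos; lra).
    replace (2 * K * E * (M0 + M2)) with (E * (2 * (K * (M0 + M2)))) by ring.
    apply Rmult_le_compat_l; lra. }
  fold r. destruct (Req_dec r 0) as [Z|Z].
  - rewrite Z. apply Rle_trans with (E * (2 * M0 / delta + delta * M2)); [|exact Bnd].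
    apply Rmult_le_pos; [lra|].
    assert (0 <= 2 * M0 / delta) by (apply Rmult_le_pos; [lra| left; apply Rinv_0_lt_compat; lra]).
    assert (0 <= delta * M2) by (apply Rmult_le_pos; lra). lra.
  - apply Rle_trans with (E * (2 * M0 / delta + delta * M2)); [|exact Bnd].
    apply Rmult_le_reg_l with r; [lra|].
    eapply Rle_trans; [exact Hcore| right; field; lra].
Qed.
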